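(* Let $\varphi:[r_+,\infty)\to\mathbb{C}$ be a $C^1$ function. Then for any $r'>r_+$, $$\int_{r_+}^{r'}|\varphi|^2\,dr\leq C\Big(\int_{r_+}^{r'}\mu^2r^2|\partial_r\varphi|^2\,dr+(r'-r_+)|\varphi(r')|^2\Big),$$ and if moreover $\lim_{r\to\infty}r|\varphi(r)|^2=0$, then $$\int_{r_+}^{\infty}|\varphi|^2\,dr\leq C\int_{r_+}^{\infty}\mu^2r^2|\partial_r\varphi|^2\,dr,$$ where $C$ is a constant depending only on $M$ and $a$.
   Context: $M>0$, $|a|<M$, $\Delta=r^2-2Mr+a^2$, $r_+=M+\sqrt{M^2-a^2}$, $\mu=\Delta/(r^2+a^2)$. *)

(* Defs.v *)
From Stdlib Require Import Reals.
From Coquelicot Require Import Coquelicot.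
Open Scope R_scope.

Definition Delta (M a r : R) : R := r ^ 2 - 2 * M * r + a ^ 2.
Definition rplus (M a : R) : R := M + sqrt (M ^ 2 - a ^ 2).
Definition mu (M a r : R) : R := Delta M a r / (r ^ 2 + a ^ 2).

Definition is_derive_on_half (x0 : R) (phi dphi : R -> C) : Prop :=
  (forall x, x0 < x -> is_derive phi x (dphi x)) /\
  filterlim (fun h => scal (/ h) (minus (phi (x0 + h)) (phi x0)))
            (at_right 0) (locally (dphi x0)).

Definition C1_on_half (x0 : R) (phi dphi : R -> C) : Prop :=
  is_derive_on_half x0 phi dphi /\
  (forall x, x0 < x -> continuous dphi x) /\
  filterlim dphi (at_right x0) (locally (dphi x0)).

(* Main.v *)
Require Import Defs.
From Stdlib Require Import Reals Lra Psatz.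
From Coquelicot Require Import Coquelicot.
Open Scope R_scope.

Lemma cont_fst (l : C) : filterlim (fun z : C => fst z) (locally l) (locally (fst l)).
Proof.
  apply (filterlim_locally (F:=locally l)). intros eps.
  apply filter_imp with (P := ball l eps). intros z [H1 H2]. exact H1.
  apply locally_ball.
Qed.
Lemma cont_snd (l : C) : filterlim (fun z : C => snd z) (locally l) (locally (snd l)).
Proof.
  apply (filterlim_locally (F:=locally l)). intros eps.
  apply filter_imp with (P := ball l eps). intros z [H1 H2]. exact H2.
  apply locally_ball.
Qed.

Lemma der_fst (phi : R -> C) x l : is_derive phi x l -> is_derive (fun t => fst (phi t)) x (fst l).
Proof.
  intros H. unfold is_derive in *.
  eapply filterdiff_ext_lin.
  eapply (filterdiff_comp' phi (fun z : C => fst z)). exact H.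
  apply filterdiff_linear, is_linear_fst.
  intros y. reflexivity.
Qed.
Lemma der_snd (phi : R -> C) x l : is_derive phi x l -> is_derive (fun t => snd (phi t)) x (snd l).
Proof.
  intros H. unfold is_derive in *.
  eapply filterdiff_ext_lin.
  eapply (filterdiff_comp' phi (fun z : C => snd z)). exact H.
  apply filterdiff_linear, is_linear_snd.
  intros y. reflexivity.
Qed.

Lemma rd_fst (phi : R -> C) p l :
  filterlim (fun h => scal (/ h) (minus (phi (p + h)) (phi p))) (at_right 0) (locally l) ->
  filterlim (fun h => / h * (fst (phi (p + h)) - fst (phi p))) (at_right 0) (locally (fst l)).
Proof.
  intros H. exact (filterlim_comp _ _ _ _ (fun z : C => fst z) _ _ _ H (cont_fst l)).
Qed.
Lemma rd_snd (phi : R -> C) p l :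
  filterlim (fun h => scal (/ h) (minus (phi (p + h)) (phi p))) (at_right 0) (locally l) ->
  filterlim (fun h => / h * (snd (phi (p + h)) - snd (phi p))) (at_right 0) (locally (snd l)).
Proof.
  intros H. exact (filterlim_comp _ _ _ _ (fun z : C => snd z) _ _ _ H (cont_snd l)).
Qed.

Definition ub (p : R) (u du : R -> R) (x : R) : R :=
  if Rle_dec p x then u x else u p + (x - p) * du p.
Definition dub (p : R) (du : R -> R) (x : R) : R :=
  if Rle_dec p x then du x else du p.

Lemma glue_der (p : R) (u du : R -> R) :
  (forall x, p < x -> is_derive u x (du x)) ->
  filterlim (fun h => / h * (u (p + h) - u p)) (at_right 0) (locally (du p)) ->
  forall x, is_derive (ub p u du) x (dub p du x).
Proof.
  intros Hd Hr x.
  destruct (Rtotal_order x p) as [Hlt|[Heq|Hgt]].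
  - unfold dub at 1. destruct (Rle_dec p x); [lra|].
    apply is_derive_ext_loc with (f := fun t => u p + (t - p) * du p).
    exists (mkposreal (p - x) ltac:(lra)). intros t Ht.
    unfold ball in Ht; simpl in Ht; unfold AbsRing_ball, abs, minus, plus, opp in Ht; simpl in Ht.
    unfold ub. destruct (Rle_dec p t); [|reflexivity].
    apply Rabs_def2 in Ht. lra.
    auto_derive. auto. ring.
  - subst x. apply is_derive_Reals. intros eps Heps.
    pose proof (proj1 (filterlim_locally _ _) Hr) as Hr2; clear Hr; rename Hr2 into Hr.
    destruct (Hr (mkposreal eps Heps)) as [d Hd'].
    exists d. intros h Hh0 Hhd.
    unfold ub, dub. destruct (Rle_dec p p); [|lra].
    destruct (Rle_dec p (p + h)).
    + assert (h > 0) by lra.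
      assert (B := Hd' h). 
      assert (ball 0 d h).
      { unfold ball; simpl; unfold AbsRing_ball, abs, minus, plus, opp; simpl.
        rewrite Ropp_0, Rplus_0_r. exact Hhd. }
      specialize (B H0 H).
      unfold ball in B; simpl in B; unfold AbsRing_ball, abs, minus, plus, opp in B; simpl in B.
      replace ((u (p + h) - u p) / h) with (/ h * (u (p + h) - u p)) by (unfold Rdiv; ring).
      exact B.
    + replace ((u p + (p + h - p) * du p - u p) / h - du p) with 0.
      rewrite Rabs_R0. exact Heps. field. auto.
  - unfold dub at 1. destruct (Rle_dec p x); [|lra].
    apply is_derive_ext_loc with (f := u).
    exists (mkposreal (x - p) ltac:(lra)). intros t Ht.
    unfold ball in Ht; simpl in Ht; unfold AbsRing_ball, abs, minus, plus, opp in Ht; simpl in Ht.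
    unfold ub. destruct (Rle_dec p t); [reflexivity|].
    apply Rabs_def2 in Ht. lra.
    apply Hd; lra.
Qed.

Lemma glue_cont (p : R) (du : R -> R) :
  (forall x, p < x -> continuous du x) ->
  filterlim du (at_right p) (locally (du p)) ->
  forall x, continuous (dub p du) x.
Proof.
  intros Hc Hr x.
  destruct (Rtotal_order x p) as [Hlt|[Heq|Hgt]].
  - apply continuous_ext_loc with (g := fun _ => du p).
    exists (mkposreal (p - x) ltac:(lra)). intros t Ht.
    unfold ball in Ht; simpl in Ht; unfold AbsRing_ball, abs, minus, plus, opp in Ht; simpl in Ht.
    unfold dub. destruct (Rle_dec p t); [|reflexivity].
    apply Rabs_def2 in Ht. lra.
    apply continuous_const.
  - subst x. unfold continuous.
    apply (filterlim_locally (F := locally p)). intros eps.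
    pose proof (proj1 (filterlim_locally _ _) Hr) as Hr2; clear Hr; rename Hr2 into Hr.
    specialize (Hr eps). destruct Hr as [d Hd].
    exists d. intros y Hy.
    unfold dub. destruct (Rle_dec p p); [|lra].
    destruct (Rle_dec p y).
    + destruct (Rle_lt_or_eq_dec _ _ r0).
      * apply Hd; auto.
      * subst y. apply ball_center.
    + apply ball_center.
  - apply continuous_ext_loc with (g := du).
    exists (mkposreal (x - p) ltac:(lra)). intros t Ht.
    unfold ball in Ht; simpl in Ht; unfold AbsRing_ball, abs, minus, plus, opp in Ht; simpl in Ht.
    unfold dub. destruct (Rle_dec p t); [reflexivity|].
    apply Rabs_def2 in Ht. lra.
    apply Hc; lra.
Qed.

Lemma mu_bound M a r : 0 < M -> Rabs a < M -> rplus M a <= r ->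
  (r - rplus M a) ^ 2 <= (rplus M a / sqrt (M ^ 2 - a ^ 2)) ^ 2 * (mu M a r ^ 2 * r ^ 2).
Proof.
  intros hM ha hr. unfold rplus in *. unfold mu, Defs.Delta.
  assert (ha2 : a ^ 2 < M ^ 2).
  { rewrite <- pow2_abs.
    assert (0 <= Rabs a) by apply Rabs_pos. nra. }
  set (s := sqrt (M ^ 2 - a ^ 2)) in *.
  assert (hs2 : s * s = M ^ 2 - a ^ 2) by (apply sqrt_sqrt; lra).
  assert (hs : 0 < s) by (apply sqrt_lt_R0; lra).
  set (p := M + s) in *.
  assert (hr0 : 0 < r) by (unfold p in hr; lra).
  assert (hD : 0 < r ^ 2 + a ^ 2) by nra.
  assert (key : (r - p) * s * (r ^ 2 + a ^ 2) <= p * ((r ^ 2 - 2 * M * r + a ^ 2) * r)).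
  { assert (E : p * ((r ^ 2 - 2 * M * r + a ^ 2) * r) - (r - p) * s * (r ^ 2 + a ^ 2)
               = (r - p) * (M * r ^ 2 - a ^ 2 * (r + s))).
    { unfold p. replace (a ^ 2) with (M^2 - s * s) by lra. ring. }
    assert (0 <= M * r ^ 2 - a ^ 2 * (r + s)).
    { assert (M * r >= M * p) by nra. unfold p in *. nra. }
    nra. }
  assert (k2 : (r - p) * s <= p * ((r ^ 2 - 2 * M * r + a ^ 2) / (r ^ 2 + a ^ 2) * r)).
  { apply Rmult_le_reg_r with (r ^ 2 + a ^ 2); auto.
    replace (p * ((r ^ 2 - 2 * M * r + a ^ 2) / (r ^ 2 + a ^ 2) * r) * (r ^ 2 + a ^ 2))
      with (p * ((r ^ 2 - 2 * M * r + a ^ 2) * r)) by (field; lra). exact key. }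
  set (m := (r ^ 2 - 2 * M * r + a ^ 2) / (r ^ 2 + a ^ 2)) in *.
  assert (0 <= (r - p) * s) by nra.
  assert (((r - p) * s) ^ 2 <= (p * (m * r)) ^ 2) by nra.
  replace ((p / s) ^ 2 * (m ^ 2 * r ^ 2)) with ((p * (m * r)) ^ 2 / (s * s)) by (field; lra).
  apply Rmult_le_reg_r with (s * s). nra.
  replace ((p * (m * r)) ^ 2 / (s * s) * (s * s)) with ((p * (m * r)) ^ 2) by (field; lra).
  replace ((r - p) ^ 2 * (s * s)) with (((r - p) * s) ^ 2) by ring. lra.
Qed.

Lemma cplus (f g : R -> R) x : continuous f x -> continuous g x -> continuous (fun t => f t + g t) x.
Proof.
  intros H1 H2. apply continuity_pt_filterlim.
  apply continuity_pt_filterlim in H1. apply continuity_pt_filterlim in H2.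
  exact (continuity_pt_plus f g x H1 H2).
Qed.
Lemma cmult (f g : R -> R) x : continuous f x -> continuous g x -> continuous (fun t => f t * g t) x.
Proof.
  intros H1 H2. apply continuity_pt_filterlim.
  apply continuity_pt_filterlim in H1. apply continuity_pt_filterlim in H2.
  exact (continuity_pt_mult f g x H1 H2).
Qed.
Lemma cconst (c : R) x : continuous (fun _ : R => c) x.
Proof. apply continuity_pt_filterlim. apply continuity_pt_const. intros u v; reflexivity. Qed.
Lemma cid x : continuous (fun t : R => t) x.
Proof. apply continuity_pt_filterlim. apply continuity_pt_id. Qed.

Lemma mu_cont M a t : 0 < t -> continuous (mu M a) t.
Proof.
  intros ht. apply (ex_derive_continuous (mu M a)). unfold mu, Defs.Delta.
  auto_derive. nra.
Qed.

Lemma part1 (M a : R) (hM : 0 < M) (ha : Rabs a < M) (phi dphi : R -> C) :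
  C1_on_half (rplus M a) phi dphi ->
  (forall r', rplus M a <= r' ->
     RInt (fun r => Cmod (phi r) ^ 2) (rplus M a) r'
     <= (2 + 4 * (rplus M a / sqrt (M ^ 2 - a ^ 2)) ^ 2) *
        (RInt (fun r => (mu M a r) ^ 2 * r ^ 2 * Cmod (dphi r) ^ 2) (rplus M a) r'
         + (r' - rplus M a) * Cmod (phi r') ^ 2))
  /\ (forall a0 b0, rplus M a <= a0 -> rplus M a <= b0 ->
        ex_RInt (fun r => (mu M a r) ^ 2 * r ^ 2 * Cmod (dphi r) ^ 2) a0 b0)
  /\ (forall t, 0 <= (mu M a t) ^ 2 * t ^ 2 * Cmod (dphi t) ^ 2).
Proof.
  intros [[Hd Hr] [Hc Hcr]].
  assert (hp : 0 < rplus M a).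
  { unfold rplus. assert (0 <= sqrt (M ^ 2 - a ^ 2)) by apply sqrt_pos. lra. }
  set (Cc := (rplus M a / sqrt (M ^ 2 - a ^ 2)) ^ 2).
  assert (hC : 0 <= Cc) by (unfold Cc; apply pow2_ge_0).
  set (p := rplus M a) in *.
  set (x := fun t => fst (phi t)). set (dx := fun t => fst (dphi t)).
  set (y := fun t => snd (phi t)). set (dy := fun t => snd (dphi t)).
  assert (HX := glue_der p x dx (fun t ht => der_fst phi t (dphi t) (Hd t ht)) (rd_fst phi p (dphi p) Hr)).
  assert (HY := glue_der p y dy (fun t ht => der_snd phi t (dphi t) (Hd t ht)) (rd_snd phi p (dphi p) Hr)).
  assert (HDX := glue_cont p dx
     (fun t ht => filterlim_comp _ _ _ dphi (fun z : C => fst z) _ _ _ (Hc t ht) (cont_fst _))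
     (filterlim_comp _ _ _ dphi (fun z : C => fst z) _ _ _ Hcr (cont_fst _))).
  assert (HDY := glue_cont p dy
     (fun t ht => filterlim_comp _ _ _ dphi (fun z : C => snd z) _ _ _ (Hc t ht) (cont_snd _))
     (filterlim_comp _ _ _ dphi (fun z : C => snd z) _ _ _ Hcr (cont_snd _))).
  set (X := ub p x dx) in *. set (DX := dub p dx) in *.
  set (Y := ub p y dy) in *. set (DY := dub p dy) in *.
  assert (cX : forall t, continuous X t) by (intros t; apply (ex_derive_continuous X); exists (DX t); auto).
  assert (cY : forall t, continuous Y t) by (intros t; apply (ex_derive_continuous Y); exists (DY t); auto).
  assert (eqX : forall t, p <= t -> X t = fst (phi t)) by (intros t ht; unfold X, ub; destruct (Rle_dec p t); [reflexivity|lra]).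
  assert (eqY : forall t, p <= t -> Y t = snd (phi t)) by (intros t ht; unfold Y, ub; destruct (Rle_dec p t); [reflexivity|lra]).
  assert (eqDX : forall t, p <= t -> DX t = fst (dphi t)) by (intros t ht; unfold DX, dub; destruct (Rle_dec p t); [reflexivity|lra]).
  assert (eqDY : forall t, p <= t -> DY t = snd (dphi t)) by (intros t ht; unfold DY, dub; destruct (Rle_dec p t); [reflexivity|lra]).
  set (G1 := fun t => X t * X t + Y t * Y t).
  set (G2 := fun t => (mu M a t * mu M a t) * (t * t) * (DX t * DX t + DY t * DY t)).
  set (F := fun t => G1 t + (t - p) * (2 * X t * DX t + 2 * Y t * DY t)).
  assert (cG1 : forall t, continuous G1 t).
  { intros t. unfold G1. apply cplus; apply cmult; auto. }
  assert (cG2 : forall t, 0 < t -> continuous G2 t).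
  { intros t ht. unfold G2. apply cmult. apply cmult. apply cmult; apply mu_cont; auto.
    apply cmult; apply cid. apply cplus; apply cmult; auto. }
  assert (cF : forall t, continuous F t).
  { intros t. unfold F. apply cplus; auto. apply cmult. apply cplus. apply cid. apply cconst.
    apply cplus; repeat apply cmult; auto using cconst. }
  assert (eq1 : forall t, p <= t -> Cmod (phi t) ^ 2 = G1 t).
  { intros t ht. unfold Cmod. rewrite pow2_sqrt. unfold G1. rewrite eqX, eqY by auto. ring.
    nra. }
  assert (eq2 : forall t, p <= t -> (mu M a t) ^ 2 * t ^ 2 * Cmod (dphi t) ^ 2 = G2 t).
  { intros t ht. unfold Cmod. rewrite pow2_sqrt. unfold G2. rewrite eqDX, eqDY by auto. ring.
    nra. }
  assert (exG2 : forall a0 b0, p <= a0 -> p <= b0 -> ex_RInt G2 a0 b0).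
  { intros a0 b0 h1 h2. apply (@ex_RInt_continuous R_CompleteNormedModule). intros z hz. apply cG2.
    assert (p <= Rmin a0 b0) by (apply Rmin_glb; auto). lra. }
  assert (ex2 : forall a0 b0, p <= a0 -> p <= b0 ->
        ex_RInt (fun r => (mu M a r) ^ 2 * r ^ 2 * Cmod (dphi r) ^ 2) a0 b0).
  { intros a0 b0 h1 h2. apply ex_RInt_ext with G2. intros z hz.
    assert (p <= Rmin a0 b0) by (apply Rmin_glb; auto). rewrite eq2 by lra. reflexivity.
    auto. }
  assert (G2pos : forall t, 0 <= (mu M a t) ^ 2 * t ^ 2 * Cmod (dphi t) ^ 2).
  { intros t. apply Rmult_le_pos. apply Rmult_le_pos; apply pow2_ge_0. apply pow2_ge_0. }
  split; [|split; assumption].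
  intros r' hr'.
  rewrite (RInt_ext (fun r => Cmod (phi r) ^ 2) G1).
  2:{ intros z hz. rewrite Rmin_left in hz by lra. apply eq1; lra. }
  rewrite (RInt_ext (fun r => (mu M a r) ^ 2 * r ^ 2 * Cmod (dphi r) ^ 2) G2).
  2:{ intros z hz. rewrite Rmin_left in hz by lra. apply eq2; lra. }
  rewrite (eq1 r') by lra.
  assert (hF : RInt F p r' = (r' - p) * G1 r').
  { set (h := fun t => (t - p) * G1 t).
    assert (Hh : forall t, is_derive h t (F t)).
    { intros t. unfold h, F, G1. auto_derive.
      split; [exists (DX t); auto | split; [exists (DX t); auto | split; [exists (DY t); auto | split; [exists (DY t); auto | exact I]]]].
      change (Derive (fun x0 : R => X x0) t) with (Derive X t). change (Derive (fun x0 : R => Y x0) t) with (Derive Y t).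
      rewrite (is_derive_unique _ _ _ (HX t)), (is_derive_unique _ _ _ (HY t)). ring. }
    rewrite (@is_RInt_unique R_CompleteNormedModule F p r' (minus (h r') (h p))).
    unfold h, minus, plus, opp; simpl. ring.
    apply (@is_RInt_derive R_CompleteNormedModule); auto. }
  assert (hG2 : 0 <= RInt G2 p r').
  { apply RInt_ge_0. lra. apply exG2; lra. intros z hz. unfold G2.
    apply Rmult_le_pos. apply Rmult_le_pos; apply Rle_0_sqr. apply Rplus_le_le_0_compat; apply Rle_0_sqr. }
  assert (hint : RInt G1 p r' <= RInt (fun t => 2 * F t + (4 * Cc) * G2 t) p r').
  { apply RInt_le; auto.
    apply (@ex_RInt_continuous R_CompleteNormedModule). intros; auto.
    apply (@ex_RInt_continuous R_CompleteNormedModule). intros z hz. rewrite Rmin_left in hz by lra.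
    apply cplus; apply cmult; auto using cconst. apply cG2. lra.
    intros t ht.
    assert (hb := mu_bound M a t hM ha ltac:(unfold p in ht; lra)).
    fold p in hb. fold Cc in hb.
    unfold F, G1, G2.
    set (w := t - p) in *. set (m := mu M a t) in *.
    assert (0 <= (Cc * (m ^ 2 * t ^ 2) - w ^ 2) * (DX t * DX t + DY t * DY t)).
    { apply Rmult_le_pos. lra. nra. }
    assert (0 <= (X t + 2 * w * DX t) ^ 2 + (Y t + 2 * w * DY t) ^ 2)
      by (apply Rplus_le_le_0_compat; apply pow2_ge_0).
    match goal with |- ?L <= ?R => assert (R - L = 4 * ((Cc * (m ^ 2 * t ^ 2) - w ^ 2) * (DX t * DX t + DY t * DY t))
         + ((X t + 2 * w * DX t) ^ 2 + (Y t + 2 * w * DY t) ^ 2)) by ring end.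
    lra. }
  assert (hsum : RInt (fun t => 2 * F t + (4 * Cc) * G2 t) p r' = 2 * RInt F p r' + (4 * Cc) * RInt G2 p r').
  { apply (@is_RInt_unique R_CompleteNormedModule). apply (is_RInt_plus (fun t => 2 * F t) (fun t => 4 * Cc * G2 t)).
    apply (is_RInt_scal F). apply (@RInt_correct R_CompleteNormedModule). apply (@ex_RInt_continuous R_CompleteNormedModule); auto.
    apply (is_RInt_scal G2). apply (@RInt_correct R_CompleteNormedModule). apply exG2; lra. }
  rewrite hsum, hF in hint.
  assert (0 <= G1 r') by (unfold G1; nra).
  assert (0 <= r' - p) by lra.
  assert (0 <= Cc * ((r' - p) * G1 r')) by (apply Rmult_le_pos; auto; apply Rmult_le_pos; auto).
  assert (0 <= Cc * RInt G2 p r') by (apply Rmult_le_pos; auto).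
  nra.
Qed.

Theorem lemma2p15 (M a : R) (hM : 0 < M) (ha : Rabs a < M) :
  exists K : R,
    forall (phi dphi : R -> C),
      C1_on_half (rplus M a) phi dphi ->
      (forall r', rplus M a < r' ->
         RInt (fun r => Cmod (phi r) ^ 2) (rplus M a) r'
         <= K * (RInt (fun r => (mu M a r) ^ 2 * r ^ 2 * Cmod (dphi r) ^ 2)
                      (rplus M a) r'
                 + (r' - rplus M a) * Cmod (phi r') ^ 2)) /\
      (is_lim (fun r => r * Cmod (phi r) ^ 2) p_infty 0 ->
         Rbar_le
           (Lim (fun R' => RInt (fun r => Cmod (phi r) ^ 2) (rplus M a) R') p_infty)
           (Rbar_mult (Finite K)
              (Lim (fun R' => RInt (fun r => (mu M a r) ^ 2 * r ^ 2 * Cmod (dphi r) ^ 2)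
                                   (rplus M a) R') p_infty))).
Proof.
  exists (2 + 4 * (rplus M a / sqrt (M ^ 2 - a ^ 2)) ^ 2).
  intros phi dphi H1.
  destruct (part1 M a hM ha phi dphi H1) as [P1 [Pex Ppos]].
  split.
  { intros r' hr'. apply P1. lra. }
  intros Hlim.
  assert (hp : 0 < rplus M a).
  { unfold rplus. assert (0 <= sqrt (M ^ 2 - a ^ 2)) by apply sqrt_pos. lra. }
  set (K := 2 + 4 * (rplus M a / sqrt (M ^ 2 - a ^ 2)) ^ 2) in *.
  set (p := rplus M a) in *.
  set (I1 := fun r => Cmod (phi r) ^ 2) in *.
  set (I2 := fun r => (mu M a r) ^ 2 * r ^ 2 * Cmod (dphi r) ^ 2) in *.
  change (Rbar_le (Lim_seq (fun n => RInt I1 p (INR n)))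
                  (Rbar_mult (Finite K) (Lim_seq (fun n => RInt I2 p (INR n))))).
  assert (HN : eventually (fun n => p < INR n)).
  { apply is_lim_seq_INR. exists p. auto. }
  destruct HN as [N HN].
  set (v := fun n => RInt I2 p (INR n)).
  set (B := fun n => (INR n - p) * I1 (INR n)).
  assert (HB : is_lim_seq B 0).
  { apply is_lim_seq_le_le_loc with (u := fun _ => 0) (w := fun n => INR n * I1 (INR n)).
    - exists N. intros n hn. specialize (HN n hn). unfold B.
      assert (0 <= I1 (INR n)) by (unfold I1; apply pow2_ge_0). split. apply Rmult_le_pos; lra. apply Rmult_le_compat_r; lra.
    - apply is_lim_seq_const.
    - exact (filterlim_comp _ _ _ INR (fun r => r * I1 r) eventually (Rbar_locally p_infty)
               (Rbar_locally 0) is_lim_seq_INR Hlim). }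
  assert (mono : forall n, (N <= n)%nat -> v n <= v (S n)).
  { intros n hn. specialize (HN n hn). unfold v.
    assert (INR n <= INR (S n)) by (rewrite S_INR; lra).
    rewrite <- (RInt_Chasles I2 p (INR n) (INR (S n))).
    assert (0 <= RInt I2 (INR n) (INR (S n))).
    { apply RInt_ge_0. lra. apply Pex; lra. intros; apply Ppos. }
    change (RInt I2 p (INR n) <= Rplus (RInt I2 p (INR n)) (RInt I2 (INR n) (INR (S n)))). lra.
    apply Pex; lra. apply Pex; lra. }
  assert (exv : ex_lim_seq v).
  { apply (ex_lim_seq_incr_n v N). apply ex_lim_seq_incr. intros n. apply mono. lia. }
  apply Rbar_le_trans with (Lim_seq (fun n => K * (v n + B n))).
  - apply Lim_seq_le_loc. exists N. intros n hn. specialize (HN n hn).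
    apply P1. lra.
  - rewrite Lim_seq_scal_l. rewrite Lim_seq_plus; auto.
    rewrite (is_lim_seq_unique B 0 HB). rewrite Rbar_plus_0_r. apply Rbar_le_refl.
    exists 0. exact HB.
    rewrite (is_lim_seq_unique B 0 HB). destruct (Lim_seq v); simpl; auto.
Qed.
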